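(* The pseudovariety $\mathsf{CS}$ of all finite completely simple semigroups (in the signature of semigroups) is strong.
   Context: For a pseudovariety $\mathsf U$ and finite set $A$, $\Omega_A\mathsf U$ is the free pro-$\mathsf U$ algebra on $A$ (here the free pro-$\mathsf{CS}$ semigroup). A $\mathsf U$-pseudoidentity is $u=v$ with $u,v\in\Omega_B\mathsf U$, $B$ finite; it holds in $T\in\mathsf U$ if both sides agree under every continuous homomorphism $\Omega_B\mathsf U\to T$; $[\![\Sigma]\!]_{\mathsf U}$ is the class of members of $\mathsf U$ satisfying $\Sigma$. Provability: for a set $\Sigma$ of $\mathsf U$-pseudoidentities and finite $A$, $\Sigma_0\subseteq\Omega_A\mathsf U\times\Omega_A\mathsf U$ is the set of pairs $(\mathbf t(\varphi(u),w_1,\dots,w_n),\mathbf t(\varphi(v),w_1,\dots,w_n))$ with $u=v$ or $v=u$ in $\Sigma$ ($u,v\in\Omega_B\mathsf U$), $\varphi:\Omega_B\mathsf U\to\Omega_A\mathsf U$ a continuous homomorphism, $\mathbf t$ a semigroup term, $w_i\in\Omega_A\mathsf U$; $\Sigma_{2\alpha+1}$ is the transitive closure of $\Sigma_{2\alpha}$, $\Sigma_{2\alpha+2}$ the topological closure of $\Sigma_{2\alpha+1}$, unions at limit ordinals; $u=v$ is provable from $\Sigma$ if $(u,v)\in\bigcup_\alpha\Sigma_\alpha$. $\mathsf U$ is strong if for every set $\Sigma$ of $\mathsf U$-pseudoidentities, every $\mathsf U$-pseudoidentity valid in $[\![\Sigma]\!]_{\mathsf U}$ is provable from $\Sigma$.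 *)

(* Defs.v *)
From HB Require Import structures.
From mathcomp Require Import all_boot all_order.
From mathcomp Require Import all_classical topology.
Set Implicit Arguments. Unset Strict Implicit. Unset Printing Implicit Defensive.
Local Open Scope classical_set_scope.

Record finSemigroup := FinSemigroup {
  fs_sort :> finType;
  fs_mul : fs_sort -> fs_sort -> fs_sort;
  fs_assoc : associative fs_mul }.

Definition is_ideal (S : finSemigroup) (I : {set S}) : Prop :=
  I != finset.set0 /\ forall s x, x \in I -> fs_mul s x \in I /\ fs_mul x s \in I.

Definition is_simple (S : finSemigroup) : Prop :=
  forall I : {set S}, is_ideal I -> I = finset.setTfor S.

Definition idempotent_elt (S : finSemigroup) (e : S) : Prop := fs_mul e e = e.

Definition idem_le (S : finSemigroup) (e f : S) : Prop :=
  e = fs_mul e f /\ e = fs_mul f e.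

Definition primitive_idempotent (S : finSemigroup) (e : S) : Prop :=
  idempotent_elt e /\
  forall f, idempotent_elt f -> idem_le f e -> f = e.

Definition completely_simple (S : finSemigroup) : Prop :=
  is_simple S /\ exists e : S, primitive_idempotent e.

Definition is_hom (X Y : Type) (mX : X -> X -> X) (mY : Y -> Y -> Y) (h : X -> Y) :=
  forall x y, h (mX x y) = mY (h x) (h y).

Definition cont_discrete (X : topologicalType) (S : Type) (h : X -> S) : Prop :=
  forall s : S, open (h @^-1` [set s]).

(* A choice, for every finite set A, of the free pro-CS semigroup Omega_A CS:
   a compact Hausdorff topological semigroup, residually CS (points are separated
   by continuous homomorphisms onto finite completely simple semigroups, i.e. it is
   pro-CS), with a map A -> Omega_A CS such that every map from A into a member of
   CS extends uniquely to a continuous homomorphism. *)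
Record freeProCS := FreeProCS {
  FP : finType -> topologicalType;
  fp_mul : forall A, FP A -> FP A -> FP A;
  fp_assoc : forall A, associative (@fp_mul A);
  fp_mul_cont : forall A, continuous (fun p : FP A * FP A => fp_mul p.1 p.2);
  fp_hausdorff : forall A, hausdorff_space (FP A);
  fp_compact : forall A, compact [set: FP A];
  fp_gen : forall A : finType, A -> FP A;
  fp_residual : forall (A : finType) (x y : FP A), x <> y ->
     exists S : finSemigroup, completely_simple S /\
       exists h : FP A -> S,
         [/\ is_hom (@fp_mul A) (@fs_mul S) h, cont_discrete h & h x <> h y];
  fp_universal : forall (A : finType) (S : finSemigroup), completely_simple S ->
     forall f : A -> S, exists h : FP A -> S,
       [/\ is_hom (@fp_mul A) (@fs_mul S) h, cont_discrete h &
           forall a, h (fp_gen a) = f a] /\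
       forall h' : FP A -> S, is_hom (@fp_mul A) (@fs_mul S) h' -> cont_discrete h' ->
          (forall a, h' (fp_gen a) = f a) -> h' = h }.

Section Pseudo.
Variable F : freeProCS.

(* a CS-pseudoidentity u = v, with u, v in Omega_B CS for a finite set B *)
Definition pseudoid := {B : finType & (FP F B * FP F B)%type}.

Definition holds_in (T : finSemigroup) (B : finType) (u v : FP F B) : Prop :=
  forall h : FP F B -> T, is_hom (@fp_mul F B) (@fs_mul T) h -> cont_discrete h ->
    h u = h v.

Definition in_model (Sigma : pseudoid -> Prop) (T : finSemigroup) : Prop :=
  completely_simple T /\
  forall p : pseudoid, Sigma p -> holds_in T (projT2 p).1 (projT2 p).2.

Inductive sterm := SVar of nat | SMul of sterm & sterm.

Fixpoint teval (X : Type) (m : X -> X -> X) (val : nat -> X) (t : sterm) : X :=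
  match t with
  | SVar i => val i
  | SMul t1 t2 => m (teval m val t1) (teval m val t2)
  end.

(* Sigma_0 on Omega_A CS: pairs (t(phi u, w_1,...,w_n), t(phi v, w_1,...,w_n)) *)
Definition Sigma0 (Sigma : pseudoid -> Prop) (A : finType) (x y : FP F A) : Prop :=
  exists (B : finType) (u v : FP F B),
    (Sigma (existT _ B (u, v)) \/ Sigma (existT _ B (v, u))) /\
    exists phi : FP F B -> FP F A,
      [/\ is_hom (@fp_mul F B) (@fp_mul F A) phi, continuous phi &
       exists (t : sterm) (w : nat -> FP F A),
         x = teval (@fp_mul F A) (fun i => if i is i'.+1 then w i' else phi u) t /\
         y = teval (@fp_mul F A) (fun i => if i is i'.+1 then w i' else phi v) t].

(* provability: the union over all ordinals of the Sigma_alpha (alternately closing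
   under transitivity and topological closure) is the least relation containing
   Sigma_0 (and the diagonal) that is transitive and topologically closed in
   Omega_A CS x Omega_A CS. *)
Definition provable (Sigma : pseudoid -> Prop) (A : finType) (x y : FP F A) : Prop :=
  forall R : FP F A -> FP F A -> Prop,
    (forall a b, Sigma0 Sigma a b -> R a b) ->
    (forall a, R a a) ->
    (forall a b c, R a b -> R b c -> R a c) ->
    closed [set p : FP F A * FP F A | R p.1 p.2] ->
    R x y.

End Pseudo.

Definition strong_CS (F : freeProCS) : Prop :=
  forall (Sigma : pseudoid F -> Prop) (A : finType) (u v : FP F A),
    (forall T : finSemigroup, in_model Sigma T -> holds_in T u v) ->
    provable Sigma u v.

(* Main.v *)
Require Import Defs.
From HB Require Import structures.
From mathcomp Require Import all_boot all_order.
From mathcomp Require Import all_classical topology.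
From mathcomp Require Import zify.
Set Implicit Arguments. Unset Strict Implicit. Unset Printing Implicit Defensive.

Section Pow.
Variables (T : Type) (m : T -> T -> T).
Hypothesis mA : associative m.

Definition pw (x : T) (n : nat) : T := iter n (m x) x.

Lemma pwS x n : pw x n.+1 = m x (pw x n). Proof. by []. Qed.
Lemma pw0 x : pw x 0 = x. Proof. by []. Qed.

Lemma pwSr x n : pw x n.+1 = m (pw x n) x.
Proof.
rewrite pwS; elim: n => [//|n IH]; by rewrite !pwS -mA -IH.
Qed.

Lemma pwD x a b : m (pw x a) (pw x b) = pw x (a + b).+1.
Proof.
elim: a => [|a IH]; first by rewrite pw0 add0n pwS.
by rewrite pwS -mA IH addSn pwS.
Qed.

Lemma pw_iter x a b : pw x (a + b) = iter a (m x) (pw x b).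
Proof. by rewrite /pw iterD. Qed.

Lemma pwM x a b : pw (pw x a) b = pw x (a.+1 * b.+1).-1.
Proof.
elim: b => [|b IH]; first by rewrite muln1.
rewrite pwS IH pwD; congr pw; rewrite mulnS; lia.
Qed.

Lemma pw_comm x y n : m x y = m y x -> m x (pw y n) = m (pw y n) x.
Proof.
move=> c; elim: n => [//|n IH]; by rewrite pwS mA c -mA IH mA.
Qed.

Lemma pw_shift x y n : m x (pw (m y x) n) = m (pw (m x y) n) x.
Proof.
elim: n => [|n IH]; first by rewrite !pw0 mA.
by rewrite [pw (m y x) _]pwS [pw (m x y) _]pwS -[in RHS]mA -IH !mA.
Qed.

Lemma pw_period x N : pw x N = x -> forall k n, pw x (n + k * N) = pw x n.
Proof.
move=> H; elim=> [|k IH] n; first by rewrite addn0.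
have -> : n + k.+1 * N = (n + k * N) + N by rewrite mulSn; lia.
by rewrite pw_iter H -/(pw x (n + k * N)) IH.
Qed.

End Pow.

Lemma hom_pw (X Y : Type) (mX : X -> X -> X) (mY : Y -> Y -> Y) (h : X -> Y) :
  is_hom mX mY h -> forall x n, h (pw mX x n) = pw mY (h x) n.
Proof. move=> hh x; elim=> [//|n IH]; by rewrite !pwS hh IH. Qed.

Section Fin.
Variable S : finSemigroup.
Local Notation m := (@fs_mul S).
Local Notation mA := (@fs_assoc S).

Lemma pw_eventual (s : S) i d : pw m s (i + d) = pw m s i ->
  forall q c, pw m s (c + i + q * d) = pw m s (c + i).
Proof.
move=> H; elim=> [|q IH] c; first by rewrite addn0.
have -> : c + i + q.+1 * d = (c + i + q * d) + d by rewrite mulSn; lia.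
have -> : c + i + q * d + d = (c + q * d) + (i + d) by lia.
rewrite pw_iter // H -pw_iter //.
have -> : c + q * d + i = c + i + q * d by lia.
exact: IH.
Qed.

Lemma idem_pow (s : S) : exists k, m (pw m s k) (pw m s k) = pw m s k.
Proof.
pose f (i : 'I_#|S|.+1) := pw m s i.
have [i [j [ij fij]]] : exists (i j : 'I_#|S|.+1), (i < j)%N /\ f i = f j.
  have : ~ injective f.
    by move=> /leq_card; rewrite card_ord ltnn.
  move=> ninj; apply: contrapT => H; apply: ninj => i j fij.
  apply/val_inj/eqP; rewrite eqn_leq; apply/negP => /negP.
  rewrite negb_and -!ltnNge => /orP [lt|lt].
    by apply: H; exists j, i.
  by apply: H; exists i, j.
have Hd : pw m s (i + (j - i)) = pw m s i.
  by rewrite subnKC ?(ltnW ij) //; rewrite /f in fij; rewrite fij.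
set d := j - i in Hd.
have dpos : 0 < d by rewrite subn_gt0.
exists ((i.+1 * d).-1).
rewrite pwD //.
have -> : ((i.+1 * d).-1 + (i.+1 * d).-1).+1 = ((i.+1 * d).-1 - i) + i + i.+1 * d.
  have : i < i.+1 * d by rewrite mulSn; nia.
  lia.
rewrite pw_eventual //; congr pw.
have : i < i.+1 * d by rewrite mulSn; nia.
lia.
exact: mA.
Qed.
End Fin.

Definition Pcs (S : finSemigroup) :=
  forall x y : S, exists n, fs_mul (pw (@fs_mul S) (fs_mul x y) n) x = x.

Section CS.
Variable S : finSemigroup.
Local Notation m := (@fs_mul S).
Local Notation mA := (@fs_assoc S).

Lemma pw_idem (e : S) n : m e e = e -> pw m e n = e.
Proof. move=> H; elim: n => [//|n IH]; by rewrite pwS IH. Qed.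

Lemma R_lemma : is_simple S -> forall x y : S, exists t, x = m (m x y) t.
Proof.
move=> simS x y.
pose I := [set s : S | [exists p, exists q, s == m (m p (m x y)) q]].
have idI : is_ideal I.
  split.
    apply/set0Pn; exists (m (m x (m x y)) x); rewrite inE.
    by apply/existsP; exists x; apply/existsP; exists x.
  move=> s z; rewrite !inE => /existsP [p /existsP [q /eqP ->]]; split.
    by apply/existsP; exists (m s p); apply/existsP; exists q; rewrite !mA.
  by apply/existsP; exists p; apply/existsP; exists (m q s); rewrite !mA.
have := simS _ idI => /setP /(_ x); rewrite !inE => /existsP [p /existsP [q /eqP Hx]].
have Hk : forall k, x = m (m (pw m p k) x) (pw m (m y q) k).
  elim=> [|k IH]; first by rewrite /= {1}Hx -!mA.
  rewrite {1}IH {1}Hx.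
  by rewrite [pw m p k.+1](pwSr mA) [pw m (m y q) k.+1]pwS -!mA.
have [k ek] := idem_pow (m y q).
have xe : x = m x (pw m (m y q) k).
  by rewrite {2}(Hk k) -mA ek -(Hk k).
case: k ek xe => [|k] _ xe.
  by exists q; rewrite {1}xe /= mA.
by exists (m q (pw m (m y q) k)); rewrite {1}xe pwS -!mA.
Qed.

Lemma group_lemma : is_simple S -> forall z : S, exists k, m (pw m z k) z = z.
Proof.
move=> simS z.
have [t Ht] := R_lemma simS z z.
have Hj : forall j, z = m (pw m z j.+1) (pw m t j).
  elim=> [|j IH]; first by rewrite {1}Ht.
  have e1 : pw m z j.+1 = m (pw m z j) z := pwSr mA z j.
  have e2 : pw m z j.+2 = m (m (pw m z j) z) z by rewrite (pwSr mA) e1.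
  rewrite {1}IH e1 e2 [pw m t j.+1]pwS {2}Ht.
  by rewrite -!mA.
have [k ek] := idem_pow z.
exists k; have Z := Hj k; rewrite (pwSr mA) in Z.
by rewrite {2}Z !mA ek -Z.
Qed.

Lemma cs_P : completely_simple S -> Pcs S.
Proof.
move=> [simS _] x y.
have [k Hk] := group_lemma simS (m x y).
have [t Ht] := R_lemma simS x y.
by exists k; rewrite {2}Ht mA Hk -Ht.
Qed.

Lemma P_cs : Pcs S -> (exists x : S, True) -> completely_simple S.
Proof.
move=> P [x0 _]; split.
  move=> I [/set0Pn [y yI] Icl]; apply/setP => x; rewrite !inE.
  have [n Hn] := P x y.
  have xyI : m x y \in I by case: (Icl x y yI).
  have : pw m (m x y) n \in I.
    elim: n {Hn} => [//|n IH]; rewrite pwS; by case: (Icl (m x y) _ IH).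
  by move=> /(Icl x) [_]; rewrite Hn.
have [k ek] := idem_pow x0.
exists (pw m x0 k); split => // f idf [f1 f2].
have [n Hn] := P (pw m x0 k) f.
move: Hn; rewrite -f2 pw_idem // -f1 => ->.
by [].
Qed.

Lemma P_exponent : Pcs S -> exists N, 0 < N /\ forall x : S, pw m x N = x.
Proof.
move=> P.
have hp : forall x : S, exists p, 0 < p /\ pw m x p = x.
  move=> x; have [n Hn] := P x x.
  exists (n.*2.+2); split => //.
  rewrite -[in RHS]Hn.
  have -> : m x x = pw m x 1 by [].
  rewrite (pwM mA) -(pwSr mA); congr pw; rewrite -muln2; lia.
pose p x := projT1 (cid (hp x)).
have pP x : 0 < p x /\ pw m x (p x) = x := projT2 (cid (hp x)).
exists (\prod_(x : S) p x); split.
  by apply: prodn_gt0 => x; case: (pP x).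
move=> x; rewrite (bigD1 x) //= mulnC.
have := pw_period (pP x).2 (\prod_(i | i != x) p i) 0.
by rewrite add0n => ->.
Qed.

End CS.

Lemma Pcs_image (S T : finSemigroup) (f : S -> T) :
  is_hom (@fs_mul S) (@fs_mul T) f -> (forall t, exists s, f s = t) -> Pcs S -> Pcs T.
Proof.
move=> hf sf P x y.
have [x' <-] := sf x; have [y' <-] := sf y.
have [n Hn] := P x' y'.
by exists n; rewrite -hf -(hom_pw hf) -hf Hn.
Qed.

Lemma I1 (S : finSemigroup) N : Pcs S -> 0 < N -> (forall x : S, pw (@fs_mul S) x N = x) ->
  forall x y : S, fs_mul (pw (@fs_mul S) (fs_mul x y) N.-1) x = x.
Proof.
move=> P N0 per x y.
set z := fs_mul x y.
have [n Hn] := P x y; rewrite -/z in Hn.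
have Hj : forall j, fs_mul (pw (@fs_mul S) z (j * n.+1 + n)) x = x.
  elim=> [|j IH]; first by rewrite mul0n add0n.
  rewrite -{2}IH -{2}Hn fs_assoc (pwD (@fs_assoc S)); congr (fs_mul (pw _ _ _) x).
  rewrite mulSn; lia.
have := Hj N.-1.
have -> : N.-1 * n.+1 + n = N.-1 + n * N.
  by nia.
by rewrite (pw_period (per z)).
Qed.

Definition prodSG (S1 S2 : finSemigroup) : finSemigroup.
Proof.
refine (@FinSemigroup (S1 * S2)%type (fun x y => (fs_mul x.1 y.1, fs_mul x.2 y.2)) _).
by move=> [a b] [c d] [e f] /=; rewrite !fs_assoc.
Defined.

Lemma per_mul (S : finSemigroup) N k : (forall x : S, pw (@fs_mul S) x N = x) ->
  forall x : S, pw (@fs_mul S) x (k * N) = x.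
Proof. by move=> per x; have := pw_period (per x) k 0; rewrite add0n. Qed.

Lemma pw_prod (S1 S2 : finSemigroup) (x : prodSG S1 S2) n :
  pw (@fs_mul (prodSG S1 S2)) x n = (pw (@fs_mul S1) x.1 n, pw (@fs_mul S2) x.2 n).
Proof. elim: n => [|n IH]; first by case: x. by rewrite pwS IH. Qed.

Lemma Pcs_prod (S1 S2 : finSemigroup) : Pcs S1 -> Pcs S2 -> Pcs (prodSG S1 S2).
Proof.
move=> P1 P2.
have [N1 [N10 per1]] := P_exponent P1.
have [N2 [N20 per2]] := P_exponent P2.
have q1 : forall x : S1, pw (@fs_mul S1) x (N1 * N2) = x.
  by move=> x; rewrite mulnC per_mul.
have q2 : forall x : S2, pw (@fs_mul S2) x (N1 * N2) = x.
  by move=> x; rewrite per_mul.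
have N0 : 0 < N1 * N2 by rewrite muln_gt0 N10 N20.
move=> x y; exists (N1 * N2).-1.
rewrite pw_prod /= (I1 P1 N0 q1) (I1 P2 N0 q2).
by case: x.
Qed.

Lemma cs_prod (S1 S2 : finSemigroup) : completely_simple S1 -> completely_simple S2 ->
  completely_simple (prodSG S1 S2).
Proof.
move=> c1 c2; apply: P_cs; first exact: Pcs_prod (cs_P c1) (cs_P c2).
by case: c1 => _ [e1 _]; case: c2 => _ [e2 _]; exists ((e1, e2) : prodSG S1 S2).
Qed.

Definition LZ (A : finType) : finSemigroup := @FinSemigroup A (fun x y => x) (fun _ _ _ => erefl).
Definition RZ (A : finType) : finSemigroup := @FinSemigroup A (fun x y => y) (fun _ _ _ => erefl).

Lemma cs_LZ (A : finType) (a : A) : completely_simple (LZ A).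
Proof. apply: P_cs; last by exists a. by move=> x y; exists 0. Qed.
Lemma cs_RZ (A : finType) (a : A) : completely_simple (RZ A).
Proof.
apply: P_cs; last by exists a.
by move=> x y; exists 0.
Qed.

Section Sub.
Variables (S : finSemigroup) (P : pred S).
Hypothesis Pm : forall x y, P x -> P y -> P (fs_mul x y).

Definition subT := {x : S | P x}.
Definition sub_mul (a b : subT) : subT := exist _ (fs_mul (val a) (val b)) (Pm (valP a) (valP b)).
Definition subSG : finSemigroup.
Proof.
refine (@FinSemigroup subT sub_mul _).
by move=> a b c; apply: val_inj => /=; rewrite fs_assoc.
Defined.

Lemma val_hom : is_hom (@fs_mul subSG) (@fs_mul S) (fun a : subSG => val a).
Proof. by []. Qed.

Lemma Pcs_sub : Pcs S -> Pcs subSG.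
Proof.
move=> PS a b; have [n Hn] := PS (val a) (val b).
exists n; apply: val_inj.
by rewrite [LHS]val_hom [val (pw _ _ _)](hom_pw val_hom).
Qed.
End Sub.

Section Quot.
Variables (S : finSemigroup) (th : S -> S -> Prop).
Hypotheses (thr : forall a, th a a) (ths : forall a b, th a b -> th b a)
  (tht : forall a b c, th a b -> th b c -> th a c)
  (thl : forall a b c, th a b -> th (fs_mul c a) (fs_mul c b))
  (thR : forall a b c, th a b -> th (fs_mul a c) (fs_mul b c)).

Definition canon (x : S) : S := odflt x [pick y | `[< th x y >]].

Lemma canon_th x : th x (canon x).
Proof. rewrite /canon; case: pickP => [y /asboolP //|_]; exact: thr. Qed.

Lemma canon_eq x y : th x y -> canon x = canon y.
Proof.
move=> xy; rewrite /canon.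
have -> : [pick z | `[< th x z >]] = [pick z | `[< th y z >]].
  apply: eq_pick => z; apply/asboolP/asboolP; [apply: tht; exact: ths | exact: tht].
case: pickP => [//|H]; have := H y; by move/asboolP: (thr y) => ->.
Qed.

Lemma canon_idem x : canon (canon x) = canon x.
Proof. symmetry; apply: canon_eq; exact: canon_th. Qed.

Lemma canon_eqP x y : canon x = canon y <-> th x y.
Proof.
split; last exact: canon_eq.
move=> e; apply: tht (canon_th x) _; rewrite e; apply: ths; exact: canon_th.
Qed.

Definition QT := {x : S | canon x == x}.
Definition qmul (a b : QT) : QT :=
  exist _ (canon (fs_mul (val a) (val b))) (introT eqP (canon_idem _)).
Definition quotSG : finSemigroup.
Proof.
refine (@FinSemigroup QT qmul _).
move=> a b c; apply: val_inj => /=; apply/canon_eqP.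
apply: tht (thl _ (ths (canon_th _))) _.
rewrite fs_assoc; exact: thR (canon_th _).
Defined.

Definition qpi (x : S) : quotSG := exist _ (canon x) (introT eqP (canon_idem x)).

Lemma qpi_hom : is_hom (@fs_mul S) (@fs_mul quotSG) qpi.
Proof.
move=> x y; apply: val_inj => /=; apply/canon_eqP.
apply: tht (thR _ (canon_th x)) _; exact: thl (canon_th y).
Qed.

Lemma qpi_surj (t : quotSG) : exists s, qpi s = t.
Proof. exists (val t); apply: val_inj => /=; exact/eqP/(valP t). Qed.

Lemma qpi_eq x y : qpi x = qpi y <-> th x y.
Proof.
split; first by move=> /(congr1 val) /= /canon_eqP.
by move=> /canon_eqP e; apply: val_inj.
Qed.
End Quot.

Local Open Scope classical_set_scope.

Lemma fip (T : topologicalType) (D : set (set T)) :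
  compact [set: T] -> D !=set0 -> (forall E, D E -> closed E) -> (forall E, D E -> E !=set0) ->
  (forall E1 E2, D E1 -> D E2 -> exists2 E3, D E3 & E3 `<=` E1 `&` E2) ->
  exists p, forall E, D E -> E p.
Proof.
move=> cT [E0 DE0] cl ne dir.
have FF : ProperFilter (filter_from D id).
  apply: filter_from_proper; last by move=> E DE; exact: ne.
  apply: filter_from_filter; first by exists E0.
  by move=> E1 E2 D1 D2; have [k Dk Hk] := dir _ _ D1 D2; exists k.
have [p [_ clp]] := cT _ FF (@filterT _ _ FF).
exists p => E DE; apply: (cl E DE) => B nB.
by apply: clp nB; exists E.
Qed.

Lemma cd_open (X : topologicalType) (S : Type) (h : X -> S) :
  cont_discrete h -> forall B : set S, open (h @^-1` B).
Proof.
move=> hc B.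
have -> : h @^-1` B = \bigcup_(s in B) h @^-1` [set s].
  by apply/seteqP; split => x /=; [move=> Bx; exists (h x) | move=> [s Bs /= ->]].
by apply: bigcup_open => s _; exact: hc.
Qed.

Lemma cd_closed (X : topologicalType) (S : Type) (h : X -> S) :
  cont_discrete h -> forall B : set S, closed (h @^-1` B).
Proof. by move=> hc B; rewrite -openC preimage_setC; exact: cd_open. Qed.

Section Free.
Variable F : freeProCS.
Variable A : finType.
Local Notation X := (FP F A).
Local Notation mX := (@fp_mul F A).

Record GH := MkGH { gS : finSemigroup; gmap : X -> gS; gcs : completely_simple gS;
  ghom : is_hom mX (@fs_mul gS) gmap; gcont : cont_discrete gmap }.

Definition ghprod (G1 G2 : GH) : GH.
Proof.
refine (@MkGH (prodSG (gS G1) (gS G2)) (fun x => (gmap G1 x, gmap G2 x))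
  (cs_prod (gcs G1) (gcs G2)) _ _).
  by move=> x y; rewrite !ghom.
move=> [s t].
have -> : (fun x => (gmap G1 x, gmap G2 x)) @^-1` [set (s, t)] =
   gmap G1 @^-1` [set s] `&` gmap G2 @^-1` [set t].
  by apply/seteqP; split => x /=; [case => -> -> | case => -> ->].
by apply: openI; [exact: gcont | exact: gcont].
Defined.

Lemma ghprod1 G1 G2 x y : gmap (ghprod G1 G2) x = gmap (ghprod G1 G2) y ->
  gmap G1 x = gmap G1 y.
Proof. by case. Qed.
Lemma ghprod2 G1 G2 x y : gmap (ghprod G1 G2) x = gmap (ghprod G1 G2) y ->
  gmap G2 x = gmap G2 y.
Proof. by case. Qed.

Definition ghunit : GH.
Proof.
refine (@MkGH (LZ unit) (fun _ => tt) (cs_LZ tt) (fun _ _ => erefl) _).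
move=> [] /=.
have -> : (fun _ : X => tt) @^-1` [set tt] = setT by apply/seteqP; split.
exact: openT.
Defined.

Lemma sep x y : (forall G : GH, gmap G x = gmap G y) -> x = y.
Proof.
move=> H; apply: contrapT => nxy.
have [S [cS [h [hh hc hxy]]]] := fp_residual nxy.
by apply: hxy; exact: (H (MkGH cS hh hc)).
Qed.

Lemma fiber_closed (G : GH) s : closed [set y | gmap G y = s].
Proof. by have := @cd_closed _ _ _ (@gcont G) [set s]. Qed.
Lemma fiber_open (G : GH) s : open [set y | gmap G y = s].
Proof. exact: (@gcont G s). Qed.

Lemma gbasis (O : set X) x : open O -> O x -> exists G : GH, forall y, gmap G y = gmap G x -> O y.
Proof.
move=> oO Ox; apply: contrapT => H.
have ne : forall G : GH, (~` O `&` [set y | gmap G y = gmap G x]) !=set0.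
  move=> G; apply: contrapT => H0; apply: H; exists G => y Gy.
  by apply: contrapT => nOy; apply: H0; exists y.
pose D := [set E | exists G : GH, E = ~` O `&` [set y | gmap G y = gmap G x]].
have [y Hy] : exists p, forall E, D E -> E p.
  apply: (@fip X D (@fp_compact F A)).
- by exists (~` O `&` [set y | gmap ghunit y = gmap ghunit x]); exists ghunit.
- by move=> E [G ->]; apply: closedI; [exact: open_closedC | exact: fiber_closed].
- by move=> E [G ->].
- move=> E1 E2 [G1 ->] [G2 ->]; exists (~` O `&` [set y | gmap (ghprod G1 G2) y = gmap (ghprod G1 G2) x]).
    by exists (ghprod G1 G2).
  by move=> y [a b]; split; split => //; [exact: ghprod1 b | exact: ghprod2 b].
have yx : y = x by apply: sep => G; case: (Hy (~` O `&` [set y | gmap G y = gmap G x])); [exists G|].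
by case: (Hy (~` O `&` [set y | gmap ghunit y = gmap ghunit x])); [exists ghunit| rewrite yx].
Qed.
End Free.

Local Open Scope classical_set_scope.

Section Univ.
Variable F : freeProCS.

Definition univ (B : finType) (S : finSemigroup) (cS : completely_simple S) (f : B -> S) :
  FP F B -> S := projT1 (cid (@fp_universal F B S cS f)).

Lemma univ_spec (B : finType) (S : finSemigroup) (cS : completely_simple S) (f : B -> S) : [/\ is_hom (@fp_mul F B) (@fs_mul S) (@univ B S cS f),
  cont_discrete (@univ B S cS f) & forall a, @univ B S cS f (@fp_gen F B a) = f a].
Proof. exact: (projT2 (cid (@fp_universal F B S cS f))).1. Qed.

Lemma univ_hom (B : finType) (S : finSemigroup) (cS : completely_simple S) (f : B -> S) :
  is_hom (@fp_mul F B) (@fs_mul S) (@univ B S cS f).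
Proof. by case: (univ_spec cS f). Qed.
Lemma univ_cont (B : finType) (S : finSemigroup) (cS : completely_simple S) (f : B -> S) :
  cont_discrete (@univ B S cS f).
Proof. by case: (univ_spec cS f). Qed.
Lemma univ_gen (B : finType) (S : finSemigroup) (cS : completely_simple S) (f : B -> S) :
  forall a, @univ B S cS f (@fp_gen F B a) = f a.
Proof. by case: (univ_spec cS f). Qed.

Lemma univ_uniq (B : finType) (S : finSemigroup) (cS : completely_simple S) (f : B -> S) (h : FP F B -> S) : is_hom (@fp_mul F B) (@fs_mul S) h ->
  cont_discrete h -> (forall a, h (@fp_gen F B a) = f a) -> h = @univ B S cS f.
Proof. exact: (projT2 (cid (@fp_universal F B S cS f))).2. Qed.

Lemma univ_in_sub (B : finType) (S : finSemigroup) (cS : completely_simple S) (P : pred S)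
  (Pm : forall x y, P x -> P y -> P (fs_mul x y)) (f : B -> S) (Pf : forall b, P (f b))
  (ne : exists s, P s) : forall z, P (@univ B S cS f z).
Proof.
have cs0 : completely_simple (subSG Pm).
  apply: P_cs; first exact: Pcs_sub (cs_P cS).
  by case: ne => s Ps; exists (exist _ s Ps).
pose f0 (b : B) : subSG Pm := exist _ (f b) (Pf b).
have [h0 c0 e0] := univ_spec cs0 f0.
have -> : @univ B S cS f = (fun z => val (@univ B _ cs0 f0 z)).
  symmetry; apply: univ_uniq.
  - by move=> x y; rewrite h0.
  - move=> s; have := @cd_open _ _ _ c0 [set t | val t = s].
    by congr open; apply/seteqP; split.
  - by move=> a; rewrite e0.
by move=> z; exact: valP.
Qed.
End Univ.

Section Lift.
Variables (F : freeProCS) (A B : finType) (x : B -> FP F A) (x0 : FP F A).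
Local Notation X := (FP F A).

Definition psi (G : GH F A) : FP F B -> gS G := univ (gcs G) (fun b => gmap G (x b)).

Lemma psi_in_image G z : exists y, gmap G y = psi G z.
Proof.
pose P := fun s : gS G => `[< exists y, gmap G y = s >].
have : P (psi G z).
  apply: univ_in_sub.
  - move=> s t /asboolP [y <-] /asboolP [y' <-]; apply/asboolP; exists (fp_mul y y').
    exact: ghom.
  - by move=> b; apply/asboolP; exists (x b).
  - by exists (gmap G x0); apply/asboolP; exists x0.
by move/asboolP.
Qed.

Lemma psi_prod G1 G2 z : psi (ghprod G1 G2) z = (psi G1 z, psi G2 z).
Proof.
have -> : psi (ghprod G1 G2) = (fun z => (psi G1 z, psi G2 z)); last by [].
symmetry; apply: univ_uniq.
- move=> u v; have [h1 _ _] := univ_spec F (gcs G1) (fun b => gmap G1 (x b)).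
  have [h2 _ _] := univ_spec F (gcs G2) (fun b => gmap G2 (x b)).
  by rewrite /psi h1 h2.
- move=> [s t].
  have [_ c1 _] := univ_spec F (gcs G1) (fun b => gmap G1 (x b)).
  have [_ c2 _] := univ_spec F (gcs G2) (fun b => gmap G2 (x b)).
  have -> : (fun z => (psi G1 z, psi G2 z)) @^-1` [set (s, t)] =
     psi G1 @^-1` [set s] `&` psi G2 @^-1` [set t].
    by apply/seteqP; split => y /=; [case => -> -> | case => -> ->].
  by apply: openI; [exact: c1 | exact: c2].
- move=> b; have [_ _ e1] := univ_spec F (gcs G1) (fun b => gmap G1 (x b)).
  have [_ _ e2] := univ_spec F (gcs G2) (fun b => gmap G2 (x b)).
  by rewrite /psi e1 e2.
Qed.

Lemma lift_ex z : exists p, forall G : GH F A, gmap G p = psi G z.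
Proof.
pose D := [set E | exists G : GH F A, E = [set y | gmap G y = psi G z]].
have [p Hp] : exists p, forall E, D E -> E p.
  apply: (@fip X D (@fp_compact F A)).
  - by exists [set y | gmap (ghunit F A) y = psi (ghunit F A) z]; exists (ghunit F A).
  - by move=> E [G ->]; exact: fiber_closed.
  - by move=> E [G ->]; have [y Hy] := psi_in_image G z; exists y.
  - move=> E1 E2 [G1 ->] [G2 ->].
    exists [set y | gmap (ghprod G1 G2) y = psi (ghprod G1 G2) z]; first by exists (ghprod G1 G2).
    by move=> y; rewrite /= psi_prod => -[-> ->].
by exists p => G; apply: (Hp [set y | gmap G y = psi G z]); exists G.
Qed.

Definition glift z : X := projT1 (cid (lift_ex z)).
Lemma liftP z G : gmap G (glift z) = psi G z.
Proof. exact: (projT2 (cid (lift_ex z))). Qed.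

Lemma lift_hom : is_hom (@fp_mul F B) (@fp_mul F A) glift.
Proof.
move=> u v; apply: sep => G.
have [h _ _] := univ_spec F (gcs G) (fun b => gmap G (x b)).
by rewrite ghom !liftP /psi h.
Qed.

Lemma lift_gen b : glift (@fp_gen F B b) = x b.
Proof.
apply: sep => G; rewrite liftP.
by have [_ _ e] := univ_spec F (gcs G) (fun b => gmap G (x b)); rewrite /psi e.
Qed.

Lemma lift_cont : continuous glift.
Proof.
apply/continuousP => O oO; rewrite openE => z Oz.
have [G HG] := gbasis oO Oz.
have [_ c _] := univ_spec F (gcs G) (fun b => gmap G (x b)).
rewrite /interior nbhsE; exists (psi G @^-1` [set psi G z]).
  by split; [exact: c | by []].
move=> z' /= e; apply: HG; by rewrite !liftP.
Qed.
End Lift.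

Local Open Scope classical_set_scope.

Section Words.
Variables (F : freeProCS) (A : finType).
Local Notation X := (FP F A).
Local Notation mX := (@fp_mul F A).
Local Notation gen := (@fp_gen F A).

Fixpoint word (a0 : A) (l : seq A) : X :=
  if l is a1 :: l' then mX (gen a0) (word a1 l') else gen a0.

Lemma word_cat a0 l a1 l' : mX (word a0 l) (word a1 l') = word a0 (l ++ a1 :: l').
Proof.
elim: l a0 => [//|b l IH] a0 /=.
by rewrite -fp_assoc IH.
Qed.

Lemma word_last a0 l : word a0 l = gen (last a0 l) \/ exists p, word a0 l = mX p (gen (last a0 l)).
Proof.
elim: l a0 => [|b l IH] a0 /=; first by left.
right; case: (IH b) => [->|[p ->]]; first by exists (gen a0).
by exists (mX (gen a0) p); rewrite fp_assoc.
Qed.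

Lemma A_inh (y : X) : exists a : A, True.
Proof.
apply: contrapT => nA.
have ext : forall (c : LZ bool) (a : A), (fun _ : X => c) (gen a) = (fun _ => true) a.
  by move=> c a; exfalso; apply: nA; exists a.
have cd : forall c : LZ bool, cont_discrete (fun _ : X => c).
  move=> c s;   case: (boolP (c == s)) => [/eqP ->|ne].
    have -> : (fun _ : X => s) @^-1` [set s] = setT by apply/seteqP; split.
    exact: openT.
  have -> : (fun _ : X => c) @^-1` [set s] = set0.
    by apply/seteqP; split => // z /= e; rewrite e eqxx in ne.
  exact: open0.
have e1 := @univ_uniq F A (LZ bool) (cs_LZ true) (fun _ => true) (fun _ => true) (fun _ _ => erefl) (cd true) (ext true).
have e2 := @univ_uniq F A (LZ bool) (cs_LZ true) (fun _ => true) (fun _ => false) (fun _ _ => erefl) (cd false) (ext false).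
have := congr1 (fun f => f y) (etrans e1 (esym e2)); by [].
Qed.

Lemma density (G : GH F A) y : exists a0 l, gmap G y = gmap G (word a0 l).
Proof.
have [a _] := A_inh y.
pose f := fun a => gmap G (gen a).
have -> : gmap G = univ (gcs G) f.
  apply: univ_uniq; [exact: ghom | exact: gcont | by []].
pose P := fun s : gS G => `[< exists a0 l, univ (gcs G) f (word a0 l) = s >].
have : P (univ (gcs G) f y).
  apply: univ_in_sub.
  - move=> s t /asboolP [a0 [l <-]] /asboolP [a1 [l' <-]]; apply/asboolP.
    exists a0, (l ++ a1 :: l'); rewrite -word_cat.
    by have [h _ _] := univ_spec F (gcs G) f; rewrite h.
  - move=> b; apply/asboolP; exists b, [::].
    by have [_ _ e] := univ_spec F (gcs G) f; rewrite /= e.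
  - by exists (f a); apply/asboolP; exists a, [::]; have [_ _ e] := univ_spec F (gcs G) f; rewrite /= e.
by move/asboolP => [a0 [l e]]; exists a0, l.
Qed.
End Words.

Section LR.
Variables (F : freeProCS) (A : finType) (a : A).
Local Notation X := (FP F A).
Local Notation mX := (@fp_mul F A).
Local Notation gen := (@fp_gen F A).

Definition lGH : GH F A := MkGH (cs_LZ a) (@univ_hom F A _ (cs_LZ a) id) (@univ_cont F A _ (cs_LZ a) id).
Definition rGH : GH F A := MkGH (cs_RZ a) (@univ_hom F A _ (cs_RZ a) id) (@univ_cont F A _ (cs_RZ a) id).

Lemma lGH_word a0 l : gmap lGH (@word F A a0 l) = a0.
Proof.
have [h _ e] := univ_spec F (cs_LZ a) id.
case: l => [|a1 l] /=; first by rewrite e.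
by rewrite h e.
Qed.

Lemma rGH_word a0 l : gmap rGH (@word F A a0 l) = last a0 l.
Proof.
have [h _ e] := univ_spec F (cs_RZ a) id.
elim: l a0 => [|a1 l IH] a0 /=; first by rewrite e.
by rewrite h /=; apply: IH.
Qed.

Lemma R_absorb (G : GH F A) N : 0 < N -> (forall s : gS G, pw (@fs_mul _) s N = s) ->
  forall b b', gmap lGH b = gmap lGH b' ->
  fs_mul (pw (@fs_mul _) (gmap G b) N.-1) (gmap G b') = gmap G b'.
Proof.
move=> N0 per b b' ebb.
have PG := cs_P (gcs G).
have [a0 [l e]] := density (ghprod G lGH) b.
have [a0' [l' e']] := density (ghprod G lGH) b'.
case: e => e el; case: e' => e' el'.
have h1 : gmap lGH b = a0 by rewrite -(lGH_word a0 l); exact: el.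
have h2 : gmap lGH b' = a0' by rewrite -(lGH_word a0' l'); exact: el'.
have a00 : a0' = a0 by rewrite -h1 -h2 ebb.
rewrite e e' a00.
set c := gmap G (gen a0).
have claim : fs_mul (pw (@fs_mul _) (gmap G (@word F A a0 l)) N.-1) c = c.
  case: l {e el} => [|a1 l] /=.
    by rewrite -(pwSr (@fs_assoc _)) prednK.
  rewrite ghom; exact: I1.
case: l' {e' el'} => [|a1 l'] /=; first exact: claim.
by rewrite ghom fs_assoc claim.
Qed.

Lemma L_absorb (G : GH F A) N : 0 < N -> (forall s : gS G, pw (@fs_mul _) s N = s) ->
  forall b b', gmap rGH b = gmap rGH b' ->
  fs_mul (gmap G b') (pw (@fs_mul _) (gmap G b) N.-1) = gmap G b'.
Proof.
move=> N0 per b b' ebb.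
have PG := cs_P (gcs G).
have [a0 [l e]] := density (ghprod G rGH) b.
have [a0' [l' e']] := density (ghprod G rGH) b'.
case: e => e el; case: e' => e' el'.
have h1 : gmap rGH b = last a0 l by rewrite -(rGH_word a0 l); exact: el.
have h2 : gmap rGH b' = last a0' l' by rewrite -(rGH_word a0' l'); exact: el'.
have a00 : last a0' l' = last a0 l by rewrite -h1 -h2 ebb.
rewrite e e'.
set d := gmap G (gen (last a0 l)).
have claim : fs_mul d (pw (@fs_mul _) (gmap G (@word F A a0 l)) N.-1) = d.
  case: (@word_last F A a0 l) => [->|[p ->]].
    by rewrite -pwS prednK.
  rewrite ghom (pw_shift (@fs_assoc _)); exact: I1.
case: (@word_last F A a0' l') => [->|[p ->]]; rewrite a00; first exact: claim.
by rewrite ghom -fs_assoc claim.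
Qed.
End LR.

Local Open Scope classical_set_scope.

Fixpoint tmap (f : nat -> nat) (t : sterm) : sterm :=
  match t with SVar i => SVar (f i) | SMul t1 t2 => SMul (tmap f t1) (tmap f t2) end.

Lemma teval_tmap (T : Type) (m : T -> T -> T) val f t :
  teval m val (tmap f t) = teval m (fun i => val (f i)) t.
Proof. by elim: t => [i|t1 IH1 t2 IH2] //=; rewrite IH1 IH2. Qed.

Lemma eq_teval (T : Type) (m : T -> T -> T) val val' t :
  (forall i, val i = val' i) -> teval m val t = teval m val' t.
Proof. by move=> H; elim: t => [i|t1 IH1 t2 IH2] //=; rewrite IH1 IH2. Qed.

Definition sh (i : nat) := if i is i'.+1 then i'.+2 else 0.

Section Cont.
Variables (F : freeProCS) (A : finType).
Local Notation X := (FP F A).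
Local Notation mX := (@fp_mul F A).

Lemma mulr_cont (c : X) : continuous (fun a => mX a c).
Proof.
move=> a.
apply: (@continuous2_cvg _ _ _ _ _ _ id (fun _ => c) (@fp_mul F A) a c).
- exact: (@fp_mul_cont F A (a, c)).
- exact: cvg_id.
- exact: cvg_cst.
Qed.

Lemma mull_cont (c : X) : continuous (fun a => mX c a).
Proof.
move=> a.
apply: (@continuous2_cvg _ _ _ _ _ _ (fun _ => c) id (@fp_mul F A) c a).
- exact: (@fp_mul_cont F A (c, a)).
- exact: cvg_cst.
- exact: cvg_id.
Qed.

Lemma pair_cont (f : X -> X) : continuous f -> continuous (fun p : X * X => (f p.1, f p.2)).
Proof.
move=> fc [a b]; apply: cvg_pair => /=.
- exact: (cvg_comp _ _ (@cvg_fst _ _ (nbhs a) (nbhs b) _) (fc a)).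
- exact: (cvg_comp _ _ (@cvg_snd _ _ (nbhs a) (nbhs b) _) (fc b)).
Qed.
End Cont.

Section Rel.
Variables (F : freeProCS) (Sigma : pseudoid F -> Prop) (A : finType).
Local Notation X := (FP F A).
Local Notation mX := (@fp_mul F A).

Definition Rel (x y : X) := @provable F Sigma A x y.
Definition RelS : set (X * X) := [set p | Rel p.1 p.2].

Lemma Rel_S0 (x y : X) : Sigma0 Sigma x y -> Rel x y.
Proof. by move=> H R H0 _ _ _; exact: H0. Qed.
Lemma Rel_refl x : Rel x x.
Proof. by move=> R _ H _ _; exact: H. Qed.
Lemma Rel_trans x y z : Rel x y -> Rel y z -> Rel x z.
Proof.
move=> xy yz R H0 H1 H2 H3; apply: (H2 _ y); [exact: xy | exact: yz].
Qed.
Lemma Rel_closed : closed RelS.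
Proof.
pose D := [set R : X -> X -> Prop | [/\ (forall a b : X, Sigma0 Sigma a b -> R a b),
   (forall a, R a a), (forall a b c, R a b -> R b c -> R a c) &
   closed [set p : X * X | R p.1 p.2]]].
have -> : RelS = \bigcap_(R in D) [set p : X * X | R p.1 p.2].
  apply/seteqP; split => [p Rp R [H0 H1 H2 H3]|p Hp]; first exact: Rp.
  by move=> R H0 H1 H2 H3; exact: (Hp R (And4 H0 H1 H2 H3)).
by apply: closed_bigI => R [].
Qed.
Lemma Rel_min (R : X -> X -> Prop) : (forall a b : X, Sigma0 Sigma a b -> R a b) ->
  (forall a, R a a) -> (forall a b c, R a b -> R b c -> R a c) ->
  closed [set p : X * X | R p.1 p.2] -> forall x y, Rel x y -> R x y.
Proof. by move=> H0 H1 H2 H3 x y H; apply: H. Qed.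

Lemma S0_sym (x y : X) : Sigma0 Sigma x y -> Sigma0 Sigma y x.
Proof.
move=> [B [u [v [Hs [phi [hphi cphi [t [w [ex ey]]]]]]]]].
exists B, v, u; split; first by case: Hs; [right|left].
by exists phi; split => //; exists t, w.
Qed.

Lemma Rel_sym x y : Rel x y -> Rel y x.
Proof.
apply: (Rel_min (R := fun a b => Rel b a)).
- by move=> a b /S0_sym; exact: Rel_S0.
- exact: Rel_refl.
- by move=> a b c ab bc; exact: Rel_trans bc ab.
- have -> : [set p : X * X | Rel p.2 p.1] = (fun p : X * X => (p.2, p.1)) @^-1` RelS by [].
  apply: preimage_closed; last exact: Rel_closed.
  move=> [a b] _; apply: cvg_pair => /=.
  + exact: (@cvg_snd _ _ (nbhs a) (nbhs b) _).
  + exact: (@cvg_fst _ _ (nbhs a) (nbhs b) _).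
Qed.

Lemma S0_mulr (c x y : X) : Sigma0 Sigma x y -> Sigma0 Sigma (mX x c) (mX y c).
Proof.
move=> [B [u [v [Hs [phi [hphi cphi [t [w [ex ey]]]]]]]]].
exists B, u, v; split => //; exists phi; split => //.
exists (SMul (tmap sh t) (SVar 1)), (fun i => if i is i'.+1 then w i' else c).
by rewrite /= !teval_tmap ex ey; split; congr mX; apply: eq_teval => -[|i].
Qed.

Lemma S0_mull (c x y : X) : Sigma0 Sigma x y -> Sigma0 Sigma (mX c x) (mX c y).
Proof.
move=> [B [u [v [Hs [phi [hphi cphi [t [w [ex ey]]]]]]]]].
exists B, u, v; split => //; exists phi; split => //.
exists (SMul (SVar 1) (tmap sh t)), (fun i => if i is i'.+1 then w i' else c).
by rewrite /= !teval_tmap ex ey; split; congr mX; apply: eq_teval => -[|i].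
Qed.

Lemma Rel_mulr c x y : Rel x y -> Rel (mX x c) (mX y c).
Proof.
apply: (Rel_min (R := fun a b => Rel (mX a c) (mX b c))).
- by move=> a b /(S0_mulr c); exact: Rel_S0.
- by move=> a; exact: Rel_refl.
- by move=> a b d ab bd; exact: Rel_trans ab bd.
- have -> : [set p : X * X | Rel (mX p.1 c) (mX p.2 c)] =
     (fun p : X * X => (mX p.1 c, mX p.2 c)) @^-1` RelS by [].
  apply: preimage_closed; last exact: Rel_closed.
  by move=> p _; exact: (@pair_cont F A _ (@mulr_cont F A c) p).
Qed.

Lemma Rel_mull c x y : Rel x y -> Rel (mX c x) (mX c y).
Proof.
apply: (Rel_min (R := fun a b => Rel (mX c a) (mX c b))).
- by move=> a b /(S0_mull c); exact: Rel_S0.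
- by move=> a; exact: Rel_refl.
- by move=> a b d ab bd; exact: Rel_trans ab bd.
- have -> : [set p : X * X | Rel (mX c p.1) (mX c p.2)] =
     (fun p : X * X => (mX c p.1, mX c p.2)) @^-1` RelS by [].
  apply: preimage_closed; last exact: Rel_closed.
  by move=> p _; exact: (@pair_cont F A _ (@mull_cont F A c) p).
Qed.

Lemma Rel_mul x y x' y' : Rel x x' -> Rel y y' -> Rel (mX x y) (mX x' y').
Proof.
move=> H1 H2; apply: Rel_trans (Rel_mulr y H1) _; exact: Rel_mull.
Qed.

Lemma Rel_pw x y n : Rel x y -> Rel (pw mX x n) (pw mX y n).
Proof. by move=> H; elim: n => [//|n IH]; rewrite !pwS; exact: Rel_mul. Qed.
End Rel.

Local Open Scope classical_set_scope.

Section Key.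
Variables (F : freeProCS) (Sigma : pseudoid F -> Prop) (A : finType) (a : A) (g : GH F A).
Local Notation X := (FP F A).
Local Notation mX := (@fp_mul F A).
Local Notation Rel := (@Rel F Sigma A).
Hypothesis gl : forall x y, gmap g x = gmap g y -> gmap (lGH F a) x = gmap (lGH F a) y.
Hypothesis gr : forall x y, gmap g x = gmap g y -> gmap (rGH F a) x = gmap (rGH F a) y.

Lemma fst_closed (S : Type) (h : X -> S) (B : set S) : cont_discrete h ->
  closed [set p : X * X | B (h p.1)].
Proof.
move=> hc; have -> : [set p : X * X | B (h p.1)] = fst @^-1` (h @^-1` B) by [].
apply: preimage_closed; last exact: cd_closed.
move=> [p q] _; exact: (@cvg_fst _ _ (nbhs p) (nbhs q) _).
Qed.
Lemma snd_closed (S : Type) (h : X -> S) (B : set S) : cont_discrete h ->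
  closed [set p : X * X | B (h p.2)].
Proof.
move=> hc; have -> : [set p : X * X | B (h p.2)] = snd @^-1` (h @^-1` B) by [].
apply: preimage_closed; last exact: cd_closed.
move=> [p q] _; exact: (@cvg_snd _ _ (nbhs p) (nbhs q) _).
Qed.

Lemma witness (H : GH F A) a1 b b' : Rel a1 b -> gmap g b = gmap g b' ->
  exists p : X * X, [/\ gmap g p.1 = gmap g a1, Rel p.1 p.2 & gmap H p.2 = gmap H b'].
Proof.
move=> ab gbb.
have [N1 [N10 per1]] := P_exponent (cs_P (gcs g)).
have [N2 [N20 per2]] := P_exponent (cs_P (gcs H)).
pose N := (N1 * N2).*2.
have NN : N = (N1 * N2).*2 by [].
have N2g : 1 < N by rewrite NN; nia.
have pg : forall s : gS g, pw (@fs_mul _) s N = s.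
  by move=> s; rewrite NN -muln2 -mulnA mulnC per_mul.
have pH : forall s : gS H, pw (@fs_mul _) s N = s.
  by move=> s; rewrite NN -muln2 [N1 * N2]mulnC -mulnA mulnC per_mul.
have N0 : 0 < N by lia.
pose z := mX (pw mX (mX a1 (pw mX b N.-1)) N.-2) a1.
pose z' := mX (pw mX (mX b (pw mX b N.-1)) N.-2) b.
pose a2 := mX (mX (mX a1 (pw mX b N.-2)) b') z.
pose x1 := mX (mX (pw mX b N.-1) b') z'.
have bN : mX b (pw mX b N.-2) = pw mX b N.-1.
  by rewrite -pwS; congr pw; lia.
exists (a2, x1) => /=; split.
-
  rewrite /a2 /z !ghom !(hom_pw (@ghom _ _ g)) !ghom !(hom_pw (@ghom _ _ g)) -gbb.
  set al := gmap g a1; set be := gmap g b.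
  have e1 : fs_mul (pw (@fs_mul _) be N.-2) be = pw (@fs_mul _) be N.-1.
    by rewrite -(pwSr (@fs_assoc _)); congr pw; lia.
  rewrite -(fs_assoc al) e1.
  set Y := fs_mul al (pw (@fs_mul _) be N.-1).
  rewrite fs_assoc.
  have -> : fs_mul Y (pw (@fs_mul _) Y N.-2) = pw (@fs_mul _) Y N.-1 by rewrite -pwS; congr pw; lia.
  exact: (I1 (cs_P (gcs g)) N0 pg).
-
  apply: (@Rel_trans F Sigma A _ (mX (mX (pw mX b N.-1) b') z)).
    rewrite /a2 -bN -!(fp_assoc) ; apply: Rel_mulr.
    exact: ab.
  rewrite /x1; apply: Rel_mull.
  by rewrite /z /z'; apply: Rel_mul => //; apply: Rel_pw; apply: Rel_mulr.
-
  rewrite /x1 /z' !ghom !(hom_pw (@ghom _ _ H)) !ghom.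
  set be := gmap H b.
  rewrite (hom_pw (@ghom _ _ H)).
  have -> : fs_mul be (pw (@fs_mul _) be N.-1) = be by rewrite -pwS prednK // pH.
  rewrite -(pwSr (@fs_assoc _)) prednK; last lia.
  rewrite (@R_absorb F A a H N N0 pH b b'); last exact: gl.
  by rewrite (@L_absorb F A a H N N0 pH b b'); last exact: gr.
Qed.

Lemma key a1 b b' c : Rel a1 b -> gmap g b = gmap g b' -> Rel b' c ->
  exists x0, gmap g x0 = gmap g a1 /\ Rel x0 c.
Proof.
move=> ab gbb bc.
pose E (H : GH F A) := [set p : X * X | gmap g p.1 = gmap g a1 /\ Rel p.1 p.2 /\ gmap H p.2 = gmap H b'].
pose D := [set E' | exists H : GH F A, E' = E H].
have [p Hp] : exists p, forall E', D E' -> E' p.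
  apply: (@fip (X * X)%type D).
  - rewrite -setXTT; apply: compact_setX; exact: fp_compact.
  - by exists (E (ghunit F A)); exists (ghunit F A).
  - move=> E' [H ->]; apply: closedI.
      exact: (@fst_closed _ _ [set gmap g a1] (@gcont _ _ g)).
    apply: closedI; first exact: Rel_closed.
    exact: (@snd_closed _ _ [set gmap H b'] (@gcont _ _ H)).
  - move=> E' [H ->]; have [q [q1 q2 q3]] := witness H ab gbb.
    by exists q.
  - move=> E1 E2 [H1 ->] [H2 ->]; exists (E (ghprod H1 H2)); first by exists (ghprod H1 H2).
    move=> q [q1 [q2 q3]]; split; split => //; split => //.
      exact: ghprod1 q3.
    exact: ghprod2 q3.
have Hp' : forall H, E H p by move=> H; apply: Hp; exists H.
have p2 : p.2 = b' by apply: sep => H; case: (Hp' H) => _ [].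
exists p.1; case: (Hp' (ghunit F A)) => p1 [p12 _]; split => //.
by apply: Rel_trans bc; rewrite -p2.
Qed.
End Key.

Local Open Scope classical_set_scope.

Section Main.
Variables (F : freeProCS) (Sigma : pseudoid F -> Prop) (A : finType) (u v : FP F A).
Local Notation X := (FP F A).
Local Notation mX := (@fp_mul F A).
Local Notation Rel := (@Rel F Sigma A).
Hypothesis Hyp : forall T : finSemigroup, in_model Sigma T -> holds_in T u v.

Lemma main : Rel u v.
Proof.
apply: contrapT => nR.
have [a _] := A_inh u.
have op : open (~` (@RelS F Sigma A)) := closed_openC (@Rel_closed F Sigma A).
have : nbhs (u, v) (~` (@RelS F Sigma A)) by rewrite openE in op; exact: op.
move=> [[P Q] /= [Pu Qv] PQ].
move: Pu; rewrite nbhsE => -[P' [oP' P'u] P'P].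
move: Qv; rewrite nbhsE => -[Q' [oQ' Q'v] Q'Q].
have [G1 HG1] := gbasis oP' P'u.
have [G2 HG2] := gbasis oQ' Q'v.
pose g := ghprod (ghprod G1 G2) (ghprod (lGH F a) (rGH F a)).
have gl : forall x y, gmap g x = gmap g y -> gmap (lGH F a) x = gmap (lGH F a) y.
  by move=> x y /ghprod2 /ghprod1.
have gr : forall x y, gmap g x = gmap g y -> gmap (rGH F a) x = gmap (rGH F a) y.
  by move=> x y /ghprod2 /ghprod2.
pose k x y := gmap g x = gmap g y.
have sepuv : forall x y, k x u -> k y v -> ~ Rel x y.
  move=> x y /ghprod1 /ghprod1 /HG1 /P'P Px /ghprod1 /ghprod2 /HG2 /Q'Q Qy Rxy.
  by apply: (PQ (x, y)).
pose th x y := exists x' y', [/\ k x x', Rel x' y' & k y' y].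
have thr : forall x, th x x by move=> x; exists x, x; split => //; exact: Rel_refl.
have ths : forall x y, th x y -> th y x.
  by move=> x y [x' [y' [h1 h2 h3]]]; exists y', x'; split => //; exact: Rel_sym.
have tht : forall x y z, th x y -> th y z -> th x z.
  move=> x y z [x1 [y1 [h1 h2 h3]]] [y2 [z2 [h4 h5 h6]]].
  have [x0 [e0 R0]] := key gl gr h2 (etrans h3 h4) h5.
  by exists x0, z2; split => //; rewrite /k h1 e0.
have thk : forall x y, k x y -> th x y.
  by move=> x y e; exists y, y; split => //; exact: Rel_refl.
have thl : forall x y c, th x y -> th (mX c x) (mX c y).
  move=> x y c [x' [y' [h1 h2 h3]]]; exists (mX c x'), (mX c y'); split.
  - by rewrite /k !ghom h1.
  - exact: Rel_mull.
  - by rewrite /k !ghom h3.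
have thR : forall x y c, th x y -> th (mX x c) (mX y c).
  move=> x y c [x' [y' [h1 h2 h3]]]; exists (mX x' c), (mX y' c); split.
  - by rewrite /k !ghom h1.
  - exact: Rel_mulr.
  - by rewrite /k !ghom h3.
have nth : ~ th u v.
  by move=> [x' [y' [h1 h2 h3]]]; apply: (sepuv x' y') => //; rewrite /k ?h1 ?h3.
pose P0 := fun s : gS g => `[< exists x, gmap g x = s >].
have Pm : forall s t, P0 s -> P0 t -> P0 (fs_mul s t).
  move=> s t /asboolP [x <-] /asboolP [y <-]; apply/asboolP; exists (mX x y).
  exact: ghom.
pose S0 := subSG Pm.
have P0g : forall x, P0 (gmap g x) by move=> x; apply/asboolP; exists x.
pose g0 (x : X) : S0 := exist _ (gmap g x) (P0g x).
have g0hom : is_hom mX (@fs_mul S0) g0 by move=> x y; apply: val_inj; exact: ghom.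
have g0surj : forall s : S0, exists x, g0 x = s.
  move=> [s Ps]; have /asboolP [x ex] := Ps; exists x; exact: val_inj.
have g0eq : forall x y, g0 x = g0 y -> k x y by move=> x y /(congr1 val).
pose th0 (s t : S0) := exists x y, [/\ g0 x = s, g0 y = t & th x y].
have th0r : forall s, th0 s s by move=> s; have [x <-] := g0surj s; exists x, x; split.
have th0s : forall s t, th0 s t -> th0 t s.
  by move=> s t [x [y [<- <- h]]]; exists y, x; split => //; exact: ths.
have th0t : forall s t w, th0 s t -> th0 t w -> th0 s w.
  move=> s t w [x [y [<- <- h1]]] [y' [z [e <- h2]]].
  exists x, z; split => //; apply: tht h1 (tht _ _ _ (thk _ _ _) h2).
  exact: g0eq.
have th0l : forall s t c, th0 s t -> th0 (fs_mul c s) (fs_mul c t).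
  move=> s t c [x [y [<- <- h]]]; have [w <-] := g0surj c.
  by exists (mX w x), (mX w y); split; [rewrite g0hom | rewrite g0hom | exact: thl].
have th0R : forall s t c, th0 s t -> th0 (fs_mul s c) (fs_mul t c).
  move=> s t c [x [y [<- <- h]]]; have [w <-] := g0surj c.
  by exists (mX x w), (mX y w); split; [rewrite g0hom | rewrite g0hom | exact: thR].
pose T := quotSG th0r th0s th0t th0l th0R.
pose pi (x : X) : T := qpi th0r th0s th0t th0l th0R (g0 x).
have pihom : is_hom mX (@fs_mul T) pi.
  by move=> x y; rewrite /pi g0hom qpi_hom.
have pieq : forall x y, pi x = pi y <-> th x y.
  move=> x y; split.
    move=> /qpi_eq [x' [y' [e1 e2 h]]].
    have h1 := thk _ _ (g0eq _ _ (esym e1)).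
    have h2 := thk _ _ (g0eq _ _ e2).
    exact: (tht _ _ _ h1 (tht _ _ _ h h2)).
  by move=> h; apply/qpi_eq; exists x, y.
have pisurj : forall t : T, exists x, pi x = t.
  move=> t; have [s <-] := qpi_surj t; have [x <-] := g0surj s; by exists x.
have picd : cont_discrete pi.
  move=> t.
  have -> : pi @^-1` [set t] = gmap g @^-1` [set s | exists x, gmap g x = s /\ pi x = t].
    apply/seteqP; split => x /=; first by move=> e; exists x.
    move=> [y [e1 e2]]; rewrite -e2; apply/pieq/thk; exact: (esym e1).
  exact: (cd_open (@gcont _ _ g)).
have cT : completely_simple T.
  apply: P_cs; last by exists (pi u).
  apply: (Pcs_image (@qpi_hom _ _ th0r th0s th0t th0l th0R) (qpi_surj (thr:=th0r) (ths:=th0s) (tht:=th0t) (thl:=th0l) (thR:=th0R))).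
  exact: Pcs_sub (cs_P (gcs g)).
have model : in_model Sigma T.
  split => // -[B [u' v']] Sp h hh hc /=.
  pose xs (b : B) := projT1 (cid (pisurj (h (@fp_gen F B b)))).
  have xsP : forall b, pi (xs b) = h (@fp_gen F B b) := fun b => projT2 (cid (pisurj (h (@fp_gen F B b)))).
  pose phi := @glift F A B xs u.
  have hphi : (fun z => pi (phi z)) = h.
    rewrite (univ_uniq cT hh hc (fun b => erefl)).
    apply: univ_uniq.
    - by move=> z z'; rewrite /phi lift_hom pihom.
    - move=> t; have := (iffLR (continuousP _) (@lift_cont F A B xs u)) _ (cd_open picd [set t]).
      by [].
    - by move=> b; rewrite /phi lift_gen xsP.
  have Rphi : Rel (phi u') (phi v').
    apply: Rel_S0; exists B, u', v'; split; first by left.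
    exists phi; split; [exact: lift_hom | exact: lift_cont |].
    by exists (SVar 0), (fun _ => u).
  have := iffRL (pieq (phi u') (phi v')) (ex_intro _ (phi u') (ex_intro _ (phi v') (And3 erefl Rphi erefl))).
  by rewrite -hphi.
have := Hyp model pihom picd.
by move=> /pieq.
Qed.
End Main.

Theorem theorem9p2 (F : freeProCS) : strong_CS F.
Proof.
move=> Sigma A u v H.
exact: (main H).
Qed.
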